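(* Let $\alpha,\beta$ be compositions with $\beta\subseteq\alpha$, and suppose $\alpha/\beta$ is the disjoint sum of nonempty skew shapes $\alpha^1/\beta^1,\ldots,\alpha^k/\beta^k$, where no two of these components share a row or a column, and $\alpha^i/\beta^i$ lies strictly above $\alpha^{i+1}/\beta^{i+1}$ for $1\le i\le k-1$. Let $n_i=|\alpha^i/\beta^i|$. If for each $i$ the poset $\mathrm{SET}(\alpha^i/\beta^i)$ has a unique minimal element $M_i$, then $\mathrm{SET}(\alpha/\beta)$ has a unique minimal element, namely the tableau whose restriction to the component $\alpha^i/\beta^i$ is obtained from $M_i$ by replacing each entry $a$ with $a+n_1+\cdots+n_{i-1}$.
   Context: Diagrams of compositions have rows numbered from the bottom, row $i$ consisting of columns $1,\ldots,\alpha_i$; for $\beta\subseteq\alpha$ the skew diagram $\alpha/\beta$ consists of the cells in row $i$, column $j$ with $\beta_i<j\le\alpha_i$. $\alpha/\beta$ is a disjoint sum of nonempty sets of cells $A_1,\ldots,A_k$ (each itself a skew shape) if these partition the cells of $\alpha/\beta$ and, for $i\ne j$, the smallest interval containing the row indices of $A_i$ is disjoint from that of $A_j$, and likewise for column indices. $\mathrm{SET}$ of a skew shape with $m$ cells is the set of bijective fillings with $1,\ldots,m$ whose rows increase left to right and columns increase bottom to top. For $1\le i\le m-1$, $\pi_i(T)=T$ if $i+1$ is in a strictly higher row than $i$, $\pi_i(T)=s_i(T)$ (swap $i$ and $i+1$) if $i+1$ is in a strictly lower row than $i$, and $\pi_i(T)=0$ otherwise; the poset order is $T\le T'$ iff $T'$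 is obtained from $T$ by a sequence of operators $\pi_i$ (all intermediate results nonzero). A minimal element is one with no strictly smaller element in $\mathrm{SET}$. *)

(* Defs.v *)
From mathcomp Require Import all_boot.
Set Implicit Arguments. Unset Strict Implicit. Unset Printing Implicit Defensive.

(* A cell is (row, column), both 0-indexed: row r here is row r+1 of the
   paper (rows numbered from the bottom), column j here is column j+1. *)
Definition cell := (nat * nat)%type.
(* A filling: value at each cell (0 outside the shape, see is_SET). *)
Definition tableau := cell -> nat.

Definition is_composition (al : seq nat) : bool := all (fun a => 0 < a) al.

Definition subcomp (be al : seq nat) : bool :=
  (size be <= size al) && all (fun i => nth 0 be i <= nth 0 al i) (iota 0 (size al)).

(* Cells of alpha/beta : row i, columns j with beta_i <= j < alpha_i
   (i.e. paper columns beta_i < j+1 <= alpha_i). *)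
Definition skew_cells (al be : seq nat) : seq cell :=
  flatten [seq [seq (i, j) | j <- iota (nth 0 be i) (nth 0 al i - nth 0 be i)]
          | i <- iota 0 (size al)].

Definition is_SET (C : seq cell) (T : tableau) : Prop :=
  [/\ forall c, c \notin C -> T c = 0,
      perm_eq (map T C) (iota 1 (size C)),
      forall c d, c \in C -> d \in C -> c.1 = d.1 -> c.2 < d.2 -> T c < T d
    & forall c d, c \in C -> d \in C -> c.2 = d.2 -> c.1 < d.1 -> T c < T d].

Definition rowof (C : seq cell) (T : tableau) (k : nat) : nat :=
  (nth (0, 0) C (find (fun c => T c == k) C)).1.

Definition swap_vals (i : nat) (T : tableau) : tableau :=
  fun c => if T c == i then i.+1 else if T c == i.+1 then i else T c.

(* pi_i ; None stands for the result 0. *)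
Definition pi_op (C : seq cell) (i : nat) (T : tableau) : option tableau :=
  let r1 := rowof C T i in
  let r2 := rowof C T i.+1 in
  if r1 < r2 then Some T
  else if r2 < r1 then Some (swap_vals i T)
  else None.

Inductive SET_le (C : seq cell) : tableau -> tableau -> Prop :=
| SET_le_refl T : SET_le C T T
| SET_le_step T T1 T' i :
    1 <= i < size C -> pi_op C i T = Some T1 -> SET_le C T1 T' -> SET_le C T T'.

Definition SET_minimal (C : seq cell) (T : tableau) : Prop :=
  is_SET C T /\ forall T', is_SET C T' -> SET_le C T' T -> T' = T.

Definition SET_unique_minimal (C : seq cell) (M : tableau) : Prop :=
  SET_minimal C M /\ forall T, SET_minimal C T -> T = M.

(* alpha/beta is the disjoint sum of the nonempty cell sets As`_0, ..., As`_(k-1)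
   (As`_0 = paper's alpha^1/beta^1), with component i strictly above component j
   for i < j (so row hulls disjoint and ordered), and column hulls disjoint. *)
Definition ordered_disjoint_sum (al be : seq nat) (As : seq (seq cell)) : Prop :=
  [/\ perm_eq (flatten As) (skew_cells al be),
      all (fun A => size A != 0) As
    & forall i j, i < j < size As ->
        (forall c d, c \in nth [::] As i -> d \in nth [::] As j -> d.1 < c.1) /\
        ((forall c d, c \in nth [::] As i -> d \in nth [::] As j -> c.2 < d.2) \/
         (forall c d, c \in nth [::] As i -> d \in nth [::] As j -> d.2 < c.2))].

Definition glue (As : seq (seq cell)) (Ms : nat -> tableau) : tableau :=
  fun c => \sum_(k < size As)
             (if c \in nth [::] As k
              then Ms k c + \sum_(l < k) size (nth [::] As l) else 0).

(* Main.v *)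
Require Import Defs.
From mathcomp Require Import all_boot.
From mathcomp Require Import zify.
From Stdlib Require Import FunctionalExtensionality.

Lemma uniq_map_inj (T1 T2 : eqType) (f : T1 -> T2) (s : seq T1) x y :
  uniq (map f s) -> x \in s -> y \in s -> f x = f y -> x = y.
Proof.
elim: s => //= a s IH /andP[fa us].
rewrite !inE => /orP[/eqP->|xs] /orP[/eqP->|ys] //.
- move=> e; case/negP: fa; rewrite e; exact: map_f.
- move=> e; case/negP: fa; rewrite -e; exact: map_f.
- exact: IH.
Qed.

Lemma perm_iota1P (s : seq nat) m : uniq s -> size s = m ->
  (forall v, v \in s -> 1 <= v <= m) -> perm_eq s (iota 1 m).
Proof.
move=> us ss hv; apply: uniq_perm => //; first exact: iota_uniq.
have [] := uniq_min_size (s2 := iota 1 m) us.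
- by move=> v /hv; rewrite mem_iota; lia.
- by rewrite size_iota ss.
by [].
Qed.

Lemma perm_iota_mem (s : seq nat) m v : perm_eq s (iota 1 m) ->
  (v \in s) = (1 <= v <= m).
Proof. move=> /perm_mem ->; rewrite mem_iota; lia. Qed.

Definition sw (i v : nat) := if v == i then i.+1 else if v == i.+1 then i else v.

Lemma swK i : involutive (sw i).
Proof. move=> v; rewrite /sw; do ! case: eqP => //=; lia. Qed.

Lemma swap_valsE i T c : swap_vals i T c = sw i (T c).
Proof. by []. Qed.

Lemma sw_lt i a b : a < b -> ~ (a = i /\ b = i.+1) -> sw i a < sw i b.
Proof. move=> ab h; rewrite /sw; do ! case: eqP => //=; lia. Qed.

Lemma swap_perm (C : seq cell) T i : perm_eq (map T C) (iota 1 (size C)) ->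
  1 <= i < size C -> perm_eq (map (swap_vals i T) C) (iota 1 (size C)).
Proof.
move=> hp hi.
have -> : map (swap_vals i T) C = map (sw i) (map T C) by rewrite -map_comp.
apply: perm_iota1P; first by rewrite map_inj_uniq ?(perm_uniq hp) ?iota_uniq //; exact: can_inj (swK i).
  by rewrite !size_map.
move=> v /mapP[w]; rewrite (perm_iota_mem _ _ _ hp) => hw ->.
rewrite /sw; do ! case: eqP => //=; lia.
Qed.

Lemma SET_inj C T c d : is_SET C T -> c \in C -> d \in C -> T c = T d -> c = d.
Proof. case=> _ hp _ _; apply: uniq_map_inj; by rewrite (perm_uniq hp) iota_uniq. Qed.

Lemma rowofE C T c k : is_SET C T -> c \in C -> T c = k -> rowof C T k = c.1.
Proof.
move=> hS cC Tc; rewrite /rowof.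
have hh : has (fun c => T c == k) C by apply/hasP; exists c => //; rewrite Tc.
have := nth_find (0,0) hh; set d := nth _ _ _ => /eqP Td.
have dC : d \in C by rewrite mem_nth // -has_find.
by rewrite (SET_inj _ _ _ _ hS dC cC) // Td Tc.
Qed.

Lemma swap_SET C T i : is_SET C T -> 1 <= i < size C ->
  (forall c d, c \in C -> d \in C -> T c = i -> T d = i.+1 -> c.1 <> d.1 /\ c.2 <> d.2) ->
  is_SET C (swap_vals i T).
Proof.
move=> hS hi hcd; have [h0 hp hr hc] := hS; split.
- by move=> c /h0; rewrite swap_valsE /sw => ->; case: eqP => //; lia.
- exact: swap_perm.
- move=> c d cC dC e l; rewrite !swap_valsE; apply: sw_lt; first exact: hr.
  by case=> a b; case: (hcd c d cC dC a b).
- move=> c d cC dC e l; rewrite !swap_valsE; apply: sw_lt; first exact: hc.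
  by case=> a b; case: (hcd c d cC dC a b).
Qed.

Lemma rowof_swap1 C T i : rowof C (swap_vals i T) i = rowof C T i.+1.
Proof.
rewrite /rowof; congr (nth _ _ _).1; apply: eq_find => c.
rewrite swap_valsE /sw; do ! case: eqP => //=; lia.
Qed.

Lemma rowof_swap2 C T i : rowof C (swap_vals i T) i.+1 = rowof C T i.
Proof.
rewrite /rowof; congr (nth _ _ _).1; apply: eq_find => c.
rewrite swap_valsE /sw; do ! case: eqP => //=; lia.
Qed.

Lemma swapK i T : swap_vals i (swap_vals i T) = T.
Proof. apply: functional_extensionality => c; rewrite !swap_valsE; exact: swK. Qed.

Lemma pi_SET C T T1 i : is_SET C T -> 1 <= i < size C -> pi_op C i T = Some T1 -> is_SET C T1.
Proof.
move=> hS hi; rewrite /pi_op.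
case: ltnP => [_ [<-]//|_]; case: ltnP => // l [<-].
apply: swap_SET => // c d cC dC Tc Td.
move: l; rewrite (rowofE _ _ _ _ hS cC Tc) (rowofE _ _ _ _ hS dC Td) => l; split; first lia.
move=> e; have [_ _ _ hc] := hS; have := hc d c dC cC (esym e) l; lia.
Qed.

Definition nodesc C T := forall i c d, 1 <= i < size C -> c \in C -> d \in C ->
  T c = i -> T d = i.+1 -> c.1 < d.1 -> ~ is_SET C (swap_vals i T).

Lemma min_char C T : is_SET C T -> SET_minimal C T <-> nodesc C T.
Proof.
move=> hS; split.
- case=> _ hm i c d hi cC dC Tc Td l hS'.
  have hle : SET_le C (swap_vals i T) T.
    apply: (SET_le_step (i := i) hi) (SET_le_refl _ _).
    rewrite /pi_op rowof_swap1 rowof_swap2 (rowofE _ _ _ _ hS cC Tc) (rowofE _ _ _ _ hS dC Td).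
    by rewrite ltnNge (ltnW l) /= l swapK.
  have := hm _ hS' hle => /(congr1 (fun f => f c)).
  rewrite swap_valsE Tc /sw eqxx; lia.
- move=> hn; split => // T' hS' hle.
  suff H : forall X Y, SET_le C X Y -> Y = T -> is_SET C X -> X = Y.
    exact: H hle erefl hS'.
  move=> X Y; elim=> // T0 T1 T2 i hi hpi hle1 IH eT hS0.
  have hS1 := pi_SET _ _ _ _ hS0 hi hpi.
  have E := IH eT hS1; subst T2 T1.
  move: hpi; rewrite /pi_op.
  case: ltnP => [_ [<-]//|_]; case: ltnP => // l [E].
  have hp := let: And4 _ hp _ _ := hS0 in hp.
  have : i \in map T0 C by rewrite (perm_iota_mem _ _ _ hp); lia.
  case/mapP => c cC Tc.
  have : i.+1 \in map T0 C by rewrite (perm_iota_mem _ _ _ hp); lia.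
  case/mapP => d dC Td.
  move: l; rewrite (rowofE _ _ _ _ hS0 cC (esym Tc)) (rowofE _ _ _ _ hS0 dC (esym Td)) => l.
  exfalso; apply: (hn i d c hi dC cC).
  + by rewrite -E swap_valsE -Td /sw; do ! case: eqP => //; lia.
  + by rewrite -E swap_valsE -Tc /sw eqxx.
  + exact: l.
  + by rewrite -E swapK.
Qed.

Definition offs (As : seq (seq cell)) k := \sum_(l < k) size (nth [::] As l).

Lemma offsS As k : offs As k.+1 = offs As k + size (nth [::] As k).
Proof. by rewrite /offs big_ord_recr. Qed.

Lemma offs_mono As k l : k <= l -> offs As k <= offs As l.
Proof.
move=> kl; rewrite -(subnKC kl); elim: (l - k) => [|t IH]; first by rewrite addn0.
by rewrite addnS offsS; apply: leq_trans IH (leq_addr _ _).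
Qed.

Lemma size_flatten_offs (As : seq (seq cell)) : size (flatten As) = offs As (size As).
Proof.
rewrite size_flatten /shape sumnE big_map (big_nth [::]) big_mkord.
by [].
Qed.

Lemma mem_flatten_nth (As : seq (seq cell)) x :
  reflect (exists2 l, l < size As & x \in nth [::] As l) (x \in flatten As).
Proof.
apply: (iffP flattenP).
- case=> s sA xs; exists (index s As); first by rewrite index_mem.
  by rewrite nth_index.
- case=> l lA xl; exists (nth [::] As l) => //; exact: mem_nth.
Qed.

Lemma size_take_offs (As : seq (seq cell)) k : k <= size As ->
  size (flatten (take k As)) = offs As k.
Proof.
move=> kn; rewrite size_flatten_offs size_takel // /offs.
by apply: eq_bigr => l _; rewrite nth_take.
Qed.

Lemma size_drop_offs (As : seq (seq cell)) k : k <= size As ->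
  size (flatten (drop k As)) = offs As (size As) - offs As k.
Proof.
move=> kn; have := congr1 (fun s => size (flatten s)) (cat_take_drop k As).
rewrite /= flatten_cat size_cat size_take_offs // -size_flatten_offs; lia.
Qed.

Lemma pigeon (s : seq nat) a b : uniq s -> (forall x, x \in s -> a <= x < b) -> size s <= b - a.
Proof.
move=> us h; have := uniq_leq_size (s2 := iota a (b - a)) us.
rewrite size_iota; apply => x /h; rewrite mem_iota; lia.
Qed.

Lemma skew_uniq al be : uniq (skew_cells al be).
Proof.
rewrite /skew_cells; apply: allpairs_uniq_dep.
- exact: iota_uniq.
- move=> x _; exact: iota_uniq.
- by move=> [x1 y1] [x2 y2] _ _ /= [e1 e2]; subst x2; rewrite e2.
Qed.

Lemma sw_shift i o x : sw (i + o) (x + o) = sw i x + o.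
Proof. rewrite /sw; do ! case: eqP => //=; lia. Qed.

Lemma sw_out i x : x <> i -> x <> i.+1 -> sw i x = x.
Proof. rewrite /sw; do ! case: eqP => //=; lia. Qed.

Theorem proposition5p1 (al be : seq nat) (As : seq (seq cell)) (Ms : nat -> tableau) :
  is_composition al -> is_composition be -> subcomp be al ->
  ordered_disjoint_sum al be As ->
  (forall k, k < size As -> SET_unique_minimal (nth [::] As k) (Ms k)) ->
  SET_unique_minimal (skew_cells al be) (glue As Ms).
Proof.
move=> _ _ _ [hperm hne hord] hM.
have uC : uniq (skew_cells al be) by exact: skew_uniq.
move: hperm uC; set C := skew_cells al be => hperm uC.
set n := size As.
have memC : forall c, reflect (exists2 k, k < n & c \in nth [::] As k) (c \in C).
  by move=> c; rewrite -(perm_mem hperm); exact: mem_flatten_nth.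
have sizeC : size C = offs As n by rewrite -(perm_size hperm) size_flatten_offs.
have below : forall k l c d, k < l -> l < n -> c \in nth [::] As k -> d \in nth [::] As l -> d.1 < c.1.
  move=> k l c d kl ln; have [h _] := hord k l (introT andP (conj kl ln)); exact: h.
have sepcol : forall k l c d, k < l -> l < n -> c \in nth [::] As k -> d \in nth [::] As l -> c.2 <> d.2.
  move=> k l c d kl ln cA dA; have [_ [h|h]] := hord k l (introT andP (conj kl ln)).
    by have := h c d cA dA; lia.
  by have := h c d cA dA; lia.
have disj : forall k l c, k < n -> l < n -> c \in nth [::] As k -> c \in nth [::] As l -> k = l.
  move=> k l c kn ln ck cl; case: (ltngtP k l) => // kl.
    by have := below _ _ _ _ kl ln ck cl; lia.
  by have := below _ _ _ _ kl kn cl ck; lia.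
have samerow : forall k l c d, k < n -> l < n -> c \in nth [::] As k -> d \in nth [::] As l -> c.1 = d.1 -> k = l.
  move=> k l c d kn ln ck dl e; case: (ltngtP k l) => // kl.
    by have := below _ _ _ _ kl ln ck dl; lia.
  by have := below _ _ _ _ kl kn dl ck; lia.
have samecol : forall k l c d, k < n -> l < n -> c \in nth [::] As k -> d \in nth [::] As l -> c.2 = d.2 -> k = l.
  move=> k l c d kn ln ck dl e; case: (ltngtP k l) => // kl.
    by exfalso; exact: (sepcol _ _ _ _ kl ln ck dl) e.
  by exfalso; exact: (sepcol _ _ _ _ kl kn dl ck) (esym e).
have inC : forall k c, k < n -> c \in nth [::] As k -> c \in C.
  by move=> k c kn ck; apply/memC; exists k.
have MS : forall k, k < n -> is_SET (nth [::] As k) (Ms k).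
  by move=> k kn; have [[h _] _] := hM k kn.
have Mrange : forall k c, k < n -> c \in nth [::] As k -> 1 <= Ms k c <= size (nth [::] As k).
  move=> k c kn ck; have [_ hp _ _] := MS k kn.
  by rewrite -(perm_iota_mem _ _ _ hp); apply: map_f.
have offsk : forall k, k < n -> offs As k + size (nth [::] As k) <= offs As n.
  by move=> k kn; rewrite -offsS; apply: offs_mono.
have offsle : forall k l, k < l -> offs As k + size (nth [::] As k) <= offs As l.
  by move=> k l kl; rewrite -offsS; apply: offs_mono.
have glueE : forall k c, k < n -> c \in nth [::] As k -> glue As Ms c = Ms k c + offs As k.
  move=> k c kn ck; rewrite /glue (bigD1 (Ordinal kn)) //= ck -/(offs As k) big1 ?addn0 //.
  move=> j /eqP jk; case: ifP => // cj; case: jk; apply: val_inj => /=.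
  exact: disj (ltn_ord j) kn cj ck.
have glue0 : forall c, c \notin C -> glue As Ms c = 0.
  move=> c cC; rewrite /glue big1 // => j _; case: ifP => // cj.
  by case/negP: cC; apply: inC cj.
have gS : is_SET C (glue As Ms).
  split.
  - exact: glue0.
  - apply: (perm_iota1P (map (glue As Ms) C) (size C)); last first.
    + move=> v /mapP[c /memC[k kn ck] ->]; rewrite (glueE k c kn ck).
      have := Mrange k c kn ck; have := offsk k kn; rewrite sizeC; lia.
    + by rewrite size_map.
    rewrite map_inj_in_uniq // => c d /memC[k kn ck] /memC[l ln dl].
    rewrite (glueE k c kn ck) (glueE l d ln dl).
    case: (ltngtP k l) => [kl|lk|e].
    + have := offsle k l kl; have := Mrange k c kn ck; have := Mrange l d ln dl; lia.
    + have := offsle l k lk; have := Mrange k c kn ck; have := Mrange l d ln dl; lia.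
    + subst l => e; apply: (SET_inj _ _ _ _ (MS k kn) ck dl); lia.
  - move=> c d /memC[k kn ck] /memC[l ln dl] e lt.
    have kl := samerow k l c d kn ln ck dl e; subst l.
    rewrite (glueE k c kn ck) (glueE k d kn dl) ltn_add2r.
    by have [_ _ h _] := MS k kn; apply: h.
  - move=> c d /memC[k kn ck] /memC[l ln dl] e lt.
    have kl := samecol k l c d kn ln ck dl e; subst l.
    rewrite (glueE k c kn ck) (glueE k d kn dl) ltn_add2r.
    by have [_ _ _ h] := MS k kn; apply: h.

have memk : forall j k z, j < n -> k < n -> z \in nth [::] As j -> (z \in nth [::] As k) = (j == k).
  move=> j k z jn kn zj; case: eqP => [<-//|ne]; apply/negP => zk; apply: ne.
  exact: disj j k z jn kn zj zk.
split.
  apply/(min_char _ _ gS) => i c d hi cC dC gc gd lt hSw.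
  case/memC: cC => k kn ck; case/memC: dC => l ln dl.
  rewrite (glueE k c kn ck) in gc; rewrite (glueE l d ln dl) in gd.
  have := Mrange k c kn ck; have := Mrange l d ln dl.
  case: (ltngtP k l) => [kl|lk|e].
  + by have := below k l c d kl ln ck dl; lia.
  + by have := offsle l k lk; lia.
  subst l => r1 r2.
  have hm : SET_minimal (nth [::] As k) (Ms k) by have [h _] := hM k kn.
  apply: ((min_char _ _ (MS k kn)).1 hm (Ms k c) c d _ ck dl erefl _ lt); idtac. { have h1 : Ms k c < Ms k d by rewrite -(ltn_add2r (offs As k)) gc gd. by case/andP: r2 => -> _; case/andP: r1 => _ /(leq_trans h1) ->. } { by apply: (@addIn (offs As k)); rewrite addSn gc gd. }
  have swE : forall z, z \in nth [::] As k ->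
      swap_vals i (glue As Ms) z = swap_vals (Ms k c) (Ms k) z + offs As k.
    by move=> z zk; rewrite !swap_valsE (glueE k z kn zk) -gc sw_shift.
  have [h0 hp hr hc] := MS k kn.
  have [_ _ hr' hc'] := hSw.
  split.
  * by move=> z nz; rewrite swap_valsE (h0 z nz) sw_out //; lia.
  * apply: swap_perm => //; lia.
  * move=> z w zA wA e l'; have := hr' z w (inC _ _ kn zA) (inC _ _ kn wA) e l'.
    by rewrite !swE //; lia.
  * move=> z w zA wA e l'; have := hc' z w (inC _ _ kn zA) (inC _ _ kn wA) e l'.
    by rewrite !swE //; lia.
move=> T hmin; have hS := hmin.1; have hn := (min_char _ _ hS).1 hmin.
have [T0 Tp Tr Tc] := hS.
have Trange : forall c, c \in C -> 1 <= T c <= offs As n.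
  by move=> c cC; rewrite -sizeC -(perm_iota_mem _ _ _ Tp); apply: map_f.
have cellof : forall v, 1 <= v <= offs As n -> exists2 c, c \in C & T c = v.
  move=> v hv; have : v \in map T C by rewrite (perm_iota_mem _ _ _ Tp) sizeC.
  by case/mapP => c cC ->; exists c.
have stepA : forall t k l c d, k < n -> l < n -> c \in nth [::] As k -> d \in nth [::] As l ->
    T d = T c + t -> k <= l.
  elim=> [|t IH] k l c d kn ln ck dl e.
    rewrite addn0 in e.
    have cd := SET_inj _ _ _ _ hS (inC _ _ ln dl) (inC _ _ kn ck) e; subst d.
    by rewrite (disj k l c kn ln ck dl).
  have := Trange d (inC _ _ ln dl) => rd.
  have [e' e'C Te'] := cellof (T c).+1 (ltac:(lia)).
  have e'C' := e'C; case/memC: e'C' => j jn ej.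
  have jl : j <= l by apply: (IH j l e' d jn ln ej dl); lia.
  suff kj : k <= j by exact: leq_trans kj jl.
  rewrite leqNgt; apply/negP => jk.
  have hi : 1 <= T c < size C.
    by have := Trange c (inC _ _ kn ck); rewrite sizeC; lia.
  apply: (hn (T c) c e' hi (inC _ _ kn ck) e'C erefl Te').
    exact: below j k e' c jk kn ej ck.
  apply: swap_SET => // c' d' c'C d'C Tc' Td'.
  have E1 := SET_inj _ _ _ _ hS c'C (inC _ _ kn ck) Tc'.
  have E2 : d' = e' by apply: (SET_inj _ _ _ _ hS d'C e'C); rewrite Td' Te'.
  subst c' d'; split.
    by have := below j k e' c jk kn ej ck; lia.
  by move=> ee; exact: (sepcol j k e' c jk kn ej ck) (esym ee).
have stepB : forall k l c d, k < n -> l < n -> c \in nth [::] As k -> d \in nth [::] As l ->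
    k < l -> T c < T d.
  move=> k l c d kn ln ck dl kl; rewrite ltnNge; apply/negP => h.
  have := stepA (T c - T d) l k d c ln kn dl ck (ltac:(lia)); lia.
have uF : uniq (flatten As) by rewrite (perm_uniq hperm).
have Tinj : forall x y, x \in C -> y \in C -> T x = T y -> x = y.
  by move=> x y xC yC; apply: SET_inj hS xC yC.
have bounds : forall k c, k < n -> c \in nth [::] As k ->
    offs As k < T c <= offs As k + size (nth [::] As k).
  move=> k c kn ck; have rc := Trange c (inC _ _ kn ck).
  have intake : forall x, x \in flatten (take k As) -> exists2 l, l < k & x \in nth [::] As l.
    move=> x /mem_flatten_nth[l]; rewrite size_take => lt xl.
    have lk : l < k by move: lt; case: (ltnP k (size As)) => h; lia.
    by exists l; rewrite // -(nth_take _ lk).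
  have indrop : forall x, x \in flatten (drop k.+1 As) -> exists2 l, k < l < n & x \in nth [::] As l.
    move=> x /mem_flatten_nth[l]; rewrite size_drop nth_drop => lt xl.
    by exists (k.+1 + l) => //; apply/andP; split; lia.
  have [uT uD] : uniq (flatten (take k As)) /\ uniq (flatten (drop k As)).
    by move: uF; rewrite -{1}(cat_take_drop k As) flatten_cat cat_uniq => /and3P[-> _ ->].
  have uD1 : uniq (flatten (drop k.+1 As)).
    by move: uF; rewrite -{1}(cat_take_drop k.+1 As) flatten_cat cat_uniq => /and3P[_ _ ->].
  have low := pigeon (map T (flatten (take k As))) 1 (T c).
  have high := pigeon (map T (flatten (drop k.+1 As))) (T c).+1 (offs As n).+1.
  rewrite !size_map size_take_offs ?(ltnW kn) // size_drop_offs // in low high.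
  have := offsk k kn; rewrite -offsS => hk.
  have lo : offs As k <= T c - 1.
    apply: low.
    - rewrite map_inj_in_uniq // => x y /intake[l lk xl] /intake[l' l'k yl].
      apply: Tinj; [exact: inC (ltn_trans lk kn) xl | exact: inC (ltn_trans l'k kn) yl].
    - move=> v /mapP[x /intake[l lk xl] ->].
      move: (Trange x (inC _ _ (ltn_trans lk kn) xl)) (stepB l k x c (ltn_trans lk kn) kn xl ck lk).
      clear; lia.
  have hi : offs As n - offs As k.+1 <= (offs As n).+1 - (T c).+1.
    apply: high.
    - rewrite map_inj_in_uniq // => x y /indrop[l /andP[_ ln] xl] /indrop[l' /andP[_ l'n] yl].
      by apply: Tinj; [exact: inC ln xl | exact: inC l'n yl].
    - move=> v /mapP[x /indrop[l /andP[kl ln] xl] ->].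
      move: (Trange x (inC _ _ ln xl)) (stepB k l c x kn ln ck xl kl); clear; lia.
  move: hi hk lo rc; rewrite offsS; clear; lia.
have stepD : forall k c, k < n -> c \in nth [::] As k -> T c = Ms k c + offs As k.
  move=> k c kn ck.
  pose R := fun z => if z \in nth [::] As k then T z - offs As k else 0.
  have RE : forall z, z \in nth [::] As k -> T z = R z + offs As k.
    by move=> z zk; rewrite /R zk; have := bounds k z kn zk; lia.
  have RS : is_SET (nth [::] As k) R.
    split.
    - by move=> z /negbTE h; rewrite /R h.
    - apply: perm_iota1P.
      + rewrite map_inj_in_uniq.
          by have [_ hp _ _] := MS k kn; apply: (map_uniq (f := Ms k)); rewrite (perm_uniq hp) iota_uniq.
        move=> x y xA yA e; apply: Tinj; [exact: inC kn xA | exact: inC kn yA |].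
        by rewrite (RE x xA) (RE y yA) e.
      + by rewrite size_map.
      + move=> v /mapP[x xA ->]; have := bounds k x kn xA; rewrite /R xA; lia.
    - move=> z w zA wA e l; have := Tr z w (inC _ _ kn zA) (inC _ _ kn wA) e l.
      by rewrite (RE z zA) (RE w wA); lia.
    - move=> z w zA wA e l; have := Tc z w (inC _ _ kn zA) (inC _ _ kn wA) e l.
      by rewrite (RE z zA) (RE w wA); lia.
  have Rmin : SET_minimal (nth [::] As k) R.
    apply/(min_char _ _ RS) => i' x y hi0 xA yA Rx Ry lt hSw.
    have hi : (1 <= i' < @size cell (nth [::] As k)) := hi0.
    have Tx : T x = i' + offs As k by rewrite (RE x xA) Rx.
    have Ty : T y = (i' + offs As k).+1 by rewrite (RE y yA) Ry.
    have hi2 : 1 <= i' + offs As k < size C.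
      by have := Trange y (inC _ _ kn yA); rewrite sizeC; lia.
    apply: (hn _ x y hi2 (inC _ _ kn xA) (inC _ _ kn yA) Tx Ty lt).
    have swE : forall z, z \in C -> swap_vals (i' + offs As k) T z =
        if z \in nth [::] As k then swap_vals i' R z + offs As k else T z.
      move=> z /memC[j jn zj]; case: ifP => zk.
        by rewrite !swap_valsE (RE z zk) sw_shift.
      have jk : j != k by rewrite -(memk j k z jn kn zj) zk.
      rewrite swap_valsE sw_out //.
      + move: (bounds j z jn zj); case: (ltngtP j k) => [jk'|kj|e]; last by rewrite e eqxx in jk.
          by move: hi (offsle j k jk'); clear; lia.
        by move: hi (offsle k j kj); clear; lia.
      + move: (bounds j z jn zj); case: (ltngtP j k) => [jk'|kj|e]; last by rewrite e eqxx in jk.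
          by move: hi (offsle j k jk'); clear; lia.
        by move: hi (offsle k j kj); clear; lia.
    have [_ _ hr' hc'] := hSw.
    split.
    - by move=> z nz; rewrite swap_valsE T0 // sw_out //; move: hi; clear; lia.
    - exact: swap_perm.
    - move=> z w zC wC e l; rewrite !swE //.
      have zC' := zC; have wC' := wC.
      case/memC: zC' => j jn zj; case/memC: wC' => j' j'n wj.
      have jj := samerow j j' z w jn j'n zj wj e; subst j'.
      rewrite (memk j k z jn kn zj) (memk j k w jn kn wj).
      case: eqP => [ejk|_]; last exact: Tr.
      by subst j; rewrite ltn_add2r; exact: hr' z w zj wj e l.
    - move=> z w zC wC e l; rewrite !swE //.
      have zC' := zC; have wC' := wC.
      case/memC: zC' => j jn zj; case/memC: wC' => j' j'n wj.
      have jj := samecol j j' z w jn j'n zj wj e; subst j'.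
      rewrite (memk j k z jn kn zj) (memk j k w jn kn wj).
      case: eqP => [ejk|_]; last exact: Tc.
      by subst j; rewrite ltn_add2r; exact: hc' z w zj wj e l.
  have [_ huniq] := hM k kn.
  by rewrite (RE c ck) (huniq R Rmin).
apply: functional_extensionality => c.
case: (boolP (c \in C)) => [/memC[k kn ck]|nc].
  by rewrite (glueE k c kn ck) (stepD k c kn ck).
by rewrite (glue0 c nc) T0.
Qed.
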